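(* Consider binary variables $Y,X_M,X_1\in\{0,1\}$ with DAG $Y\to X_M$, $Y\to X_1$, $X_M\to X_1$, where $X_1$ is stable (its mechanism $P(X_1\mid X_M,Y)$ and $P(Y)$ are the same in all environments) and $X_M$ is mutable (its mechanism $P^e(X_M\mid Y)$ may be arbitrary in environment $e$). Let $\mathcal{E}$ be the set of all such environments. Then there exist $P(Y)$ and $P(X_1\mid X_M,Y)$ such that $\max_{e\in\mathcal{E}}\mathbb{E}_{P^e}[(Y-f_S(\mathbf{X}))^2]>\max_{e\in\mathcal{E}}\mathbb{E}_{P^e}[(Y-f_\emptyset(\mathbf{X}))^2]$, where $f_S(\boldsymbol x):=\mathbb{E}[Y\mid x_1,do(x_M)]$ and $f_\emptyset(\boldsymbol x):=\mathbb{E}[Y\mid do(x_M)]$.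
   Context: Interventional distributions are defined by truncated factorization: $P(Y,X_1\mid do(X_M=x_M))=P(Y)P(X_1\mid x_M,Y)$, so $\mathbb{E}[Y\mid x_1,do(x_M)]=\frac{P(Y=1)P(x_1\mid x_M,Y=1)}{\sum_{y}P(y)P(x_1\mid x_M,y)}$ and $\mathbb{E}[Y\mid do(x_M)]=\mathbb{E}[Y]$. *)

(* Defs.v *)
From HB Require Import structures.
From mathcomp Require Import all_boot all_order all_algebra.
From mathcomp Require Import classical_sets reals.
Set Implicit Arguments. Unset Strict Implicit. Unset Printing Implicit Defensive.
Import Order.TTheory GRing.Theory Num.Theory.
Local Open Scope ring_scope.
Local Open Scope classical_set_scope.

(* Binary variables are encoded by bool (true = 1, false = 0). *)
Section Model.
Variable R : realType.

Definition bern (a : R) (b : bool) : R := if b then a else 1 - a.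

(* Stable part of the model:
   pY = P(Y = 1);  q xm y = P(X1 = 1 | X_M = xm, Y = y).
   Environment e: r y = P^e(X_M = 1 | Y = y). *)
Definition valid_stable (pY : R) (q : bool -> bool -> R) : Prop :=
  0 <= pY <= 1 /\ (forall xm y, 0 <= q xm y <= 1).

Definition environments : set (bool -> R) :=
  [set r | forall y, 0 <= r y <= 1].

Definition joint (pY : R) (q : bool -> bool -> R) (r : bool -> R)
    (y xm x1 : bool) : R :=
  bern pY y * bern (r y) xm * bern (q xm y) x1.

(* Interventional distribution by truncated factorization:
   P(Y = y, X1 = x1 | do(X_M = xm)) = P(y) P(x1 | xm, y). *)
Definition pdo (pY : R) (q : bool -> bool -> R) (xm y x1 : bool) : R :=
  bern pY y * bern (q xm y) x1.

(* f_S(x) = E[Y | x1, do(xm)]  (division by 0 yields 0, MathComp convention) *)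
Definition fS (pY : R) (q : bool -> bool -> R) (xm x1 : bool) : R :=
  pdo pY q xm true x1 / \sum_(y : bool) pdo pY q xm y x1.

Definition fE (pY : R) (q : bool -> bool -> R) (xm x1 : bool) : R :=
  \sum_(y : bool) \sum_(x1' : bool) (y%:R) * pdo pY q xm y x1'.

Definition risk (pY : R) (q : bool -> bool -> R) (r : bool -> R)
    (f : bool -> bool -> R) : R :=
  \sum_(y : bool) \sum_(xm : bool) \sum_(x1 : bool)
    joint pY q r y xm x1 * (y%:R - f xm x1) ^+ 2.

(* Worst-case risk over all environments (a max, attained by compactness). *)
Definition worst_risk (pY : R) (q : bool -> bool -> R)
    (f : bool -> bool -> R) : R :=
  sup [set risk pY q r f | r in environments].

End Model.

(* Main.v *)
Require Import Defs.
From HB Require Import structures.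
From mathcomp Require Import all_boot all_order all_algebra.
From mathcomp Require Import classical_sets reals.
From mathcomp Require Import ring lra.
Import Order.TTheory GRing.Theory Num.Theory.
Local Open Scope ring_scope.

Theorem mainTheorem3 (R : realType) :
  exists (pY : R) (q : bool -> bool -> R),
    valid_stable pY q /\
    worst_risk pY q (fS pY q) > worst_risk pY q (fE pY q).
Proof.
pose pY : R := 1/5.
pose q : bool -> bool -> R := fun xm y => if xm then (if y then 1 else 1/5) else 0.
exists pY, q; split.
  split; first by rewrite /pY; apply/andP; split; lra.
  by move=> [] [] /=; apply/andP; split; lra.
have fS00 : fS pY q false false = 1/5.
  rewrite /fS /pdo big_bool /bern /q /pY /=; by field.
have fS01 : fS pY q false true = 0.
  by rewrite /fS /pdo big_bool /bern /q /pY /= !mulr0 mul0r.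
have fS10 : fS pY q true false = 0.
  by rewrite /fS /pdo big_bool /bern /q /pY /= subrr mulr0 mul0r.
have fS11 : fS pY q true true = 5/9.
  rewrite /fS /pdo big_bool /bern /q /pY /=; by field.
have fEv : forall a b, fE pY q a b = 1/5.
  move=> a b; rewrite /fE /pdo !big_bool /bern /q /pY /=; case: a => /=; by field.
have rE : forall r, risk pY q r (fE pY q) = 4/25.
  move=> r; idtac; rewrite /risk !big_bool; rewrite !fEv /joint /bern /q /pY /=; by field.
have rS : forall r, risk pY q r (fS pY q) =
   1/5 * (r true * (16/81)) + 4/5 * ((1 - r false) * (1/25) + r false * (1/5 * (25/81)))
   + 1/5 * (1 - r true) * (16/25).
  move=> r; rewrite /risk !big_bool fS00 fS01 fS10 fS11 /joint /bern /q /pY /=; by field.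
have ub1 : worst_risk pY q (fE pY q) <= 4/25.
  apply: ge_sup.
    exists (4/25), (fun _ => 0); last exact: rE.
    by move=> y; apply/andP; split; lra.
  by move=> x [r _ <-]; rewrite rE.
pose r0 : bool -> R := fun y => if y then 0 else 1.
have lb : risk pY q r0 (fS pY q) <= worst_risk pY q (fS pY q).
  apply: ub_le_sup; last by exists r0 => //; move=> [] /=; apply/andP; split; lra.
  exists 1 => x [r Hr <-]; rewrite rS.
  have := Hr true; have := Hr false; move=> /andP[? ?] /andP[? ?]; nra.
rewrite rS /r0 /= in lb.
lra.
Qed.
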